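(* Let $\mathbb{K}=\mathbb{R}$ or $\mathbb{C}$ and let $\phi:A_1^\ast\to A_2^\ast$ be a morphism of cohomologically connected DGAs over $\mathbb{K}$ inducing isomorphisms on $0$-th and first cohomology and an injection on second cohomology. Let $V=\bigoplus_i V_i$ be a finite-dimensional graded $\mathbb{K}$-vector space, $W_k(V)=\bigoplus_{i\le k}V_i$, and for $i\ge 0$ let $U_i\subset\mathrm{End}(V)$ be the endomorphisms mapping each $V_j$ into $V_{j-i}$ (so $U_iU_j\subset U_{i+j}$). Let $\omega=\sum_{i\ge1}\omega_i$, $\omega_i\in A_2^1\otimes U_i$, satisfy $d\omega+\omega\wedge\omega=0$, i.e. $d\omega_k=-\sum_{i+j=k,\,i,j\ge1}\omega_i\wedge\omega_j$ for all $k$. Put $a_0=\mathrm{Id}_V$. Then there exist $\Omega_i\in A_1^1\otimes U_i$ and $a_i\in A_2^0\otimes U_i$ for all $i\ge1$ such that for every $k\ge1$ \[d\Omega_k=-\sum_{i+j=k,\,i,j\ge1}\Omega_i\wedge\Omega_j,\qquad da_k=-\sum_{i+j=k,\,i\ge1,\,j\ge0}\omega_ia_j+\sum_{i+j=k,\,i\ge0,\,j\ge1}a_i\phi(\Omega_j).\]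
   Context: Products $\omega_i\wedge\omega_j$, $\omega_ia_j$, etc. combine the product of the DGA with composition in $\mathrm{End}(V)$; $\phi$ is applied to the form part. A DGA is cohomologically connected if $H^0\cong\mathbb{K}$. *)

(* Defs.v *)
From HB Require Import structures.
From mathcomp Require Import all_boot all_order all_algebra.
From mathcomp Require Import reals complex.
Set Implicit Arguments. Unset Strict Implicit. Unset Printing Implicit Defensive.
Import Order.TTheory GRing.Theory Num.Theory.
Local Open Scope ring_scope.

Definition Kof (R : realType) (b : bool) : fieldType :=
  if b then (R[i] : fieldType) else (R : fieldType).

(* A (non-negatively graded, associative, unital) DGA over K, presented as a
   K-algebra A together with its homogeneous components  deg p = A^p  and a
   K-linear differential d. *)
Record is_DGA (K : fieldType) (A : algType K) (deg : nat -> {pred A})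
    (d : {linear A -> A}) : Prop := {
  dga_sub0 : forall p, 0 \in deg p;
  dga_subZD : forall p (a : K) x y, x \in deg p -> y \in deg p ->
      a *: x + y \in deg p;
  dga_span : forall x : A, exists (N : nat) (f : nat -> A),
      (forall p, f p \in deg p) /\ x = \sum_(p < N) f p;
  dga_direct : forall (N : nat) (f : nat -> A),
      (forall p, f p \in deg p) -> \sum_(p < N) f p = 0 ->
      forall p, (p < N)%N -> f p = 0;
  dga_one : 1 \in deg 0;
  dga_mul : forall p q x y, x \in deg p -> y \in deg q -> x * y \in deg (p + q);
  dga_d_deg : forall p x, x \in deg p -> d x \in deg p.+1;
  dga_dd : forall x, d (d x) = 0;
  dga_leibniz : forall p x y, x \in deg p ->
      d (x * y) = d x * y + (-1) ^+ p * (x * d y)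
}.

Definition exact_in (K : fieldType) (A : algType K) (deg : nat -> {pred A})
    (d : {linear A -> A}) (p : nat) (x : A) : Prop :=
  match p with
  | 0 => x = 0
  | p'.+1 => exists y, y \in deg p' /\ x = d y
  end.

(* Cohomologically connected: H^0(A) = Z^0(A) is isomorphic to K, i.e.
   (since 1 is a 0-cocycle) 1 <> 0 and every 0-cocycle is a multiple of 1. *)
Definition cohom_connected (K : fieldType) (A : algType K)
    (deg : nat -> {pred A}) (d : {linear A -> A}) : Prop :=
  (1 : A) != 0 /\
  forall x, x \in deg 0 -> d x = 0 -> exists c : K, x = c *: 1.

Definition is_DGA_morphism (K : fieldType) (A1 A2 : algType K)
    (deg1 : nat -> {pred A1}) (d1 : {linear A1 -> A1})
    (deg2 : nat -> {pred A2}) (d2 : {linear A2 -> A2})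
    (phi : {lrmorphism A1 -> A2}) : Prop :=
  (forall p x, x \in deg1 p -> phi x \in deg2 p) /\
  (forall x, phi (d1 x) = d2 (phi x)).

Definition H_injective (K : fieldType) (A1 A2 : algType K)
    (deg1 : nat -> {pred A1}) (d1 : {linear A1 -> A1})
    (deg2 : nat -> {pred A2}) (d2 : {linear A2 -> A2})
    (phi : {lrmorphism A1 -> A2}) (p : nat) : Prop :=
  forall x, x \in deg1 p -> d1 x = 0 ->
    exact_in deg2 d2 p (phi x) -> exact_in deg1 d1 p x.

Definition H_surjective (K : fieldType) (A1 A2 : algType K)
    (deg1 : nat -> {pred A1}) (d1 : {linear A1 -> A1})
    (deg2 : nat -> {pred A2}) (d2 : {linear A2 -> A2})
    (phi : {lrmorphism A1 -> A2}) (p : nat) : Prop :=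
  forall z, z \in deg2 p -> d2 z = 0 ->
    exists x, [/\ x \in deg1 p, d1 x = 0 & exact_in deg2 d2 p (z - phi x)].

(* The graded vector space V = (+)_i V_i is represented by a homogeneous
   basis e_0, ..., e_{n-1}, with e_r of weight w r; End(V) is 'M_n acting
   on columns (column c holds the coordinates of the image of e_c).
   A^p (x) U_i is the space of n x n matrices with entries in A^p which
   map V_j into V_{j-i}: entry (r,c) may be nonzero only if w c = w r + i. *)
Definition in_AU (K : fieldType) (A : algType K) (deg : nat -> {pred A})
    (n : nat) (w : 'I_n -> int) (p i : nat) (X : 'M[A]_n) : Prop :=
  forall r c, X r c \in deg p /\ (X r c != 0 -> w c = w r + i%:Z).

(* Main.v *)
Require Import Defs.
From HB Require Import structures.
From mathcomp Require Import all_boot all_order all_algebra.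
From mathcomp Require Import reals complex.
From Stdlib Require Import IndefiniteDescription ClassicalEpsilon.
Import Order.TTheory GRing.Theory Num.Theory.
Set Implicit Arguments. Unset Strict Implicit. Unset Printing Implicit Defensive.
Local Open Scope ring_scope.


Section Conv.
Variables (R : pzRingType) (n : nat).
Implicit Types f g h : nat -> 'M[R]_n.

Definition conv f g k : 'M[R]_n := \sum_(i < k.+1) f i *m g (k - i)%N.

Lemma conv_rev f g k : conv f g k = \sum_(i < k.+1) f (k - i)%N *m g i.
Proof.
rewrite /conv (reindex_inj rev_ord_inj) /=.
by apply: eq_bigr => j _; rewrite (sub_ordK j).
Qed.

Lemma convA f g h k :
  conv (conv f g) h k = conv f (conv g h) k.
Proof.
symmetry; rewrite [RHS]conv_rev {1}/conv.
pose c3 j l := f j *m (g (k - j - l)%N *m h l).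
transitivity (\sum_(j < k.+1) \sum_(l < k.+1 | (l <= k - j)%N) c3 j l).
  apply: eq_bigr => /= j _; rewrite conv_rev mulmx_sumr.
  by rewrite (big_ord_narrow_leq (leq_subr _ _)).
rewrite (exchange_big_dep predT) //=; apply: eq_bigr => l _.
transitivity (\sum_(j < k.+1 | (j <= k - l)%N) c3 j l).
  apply: eq_bigl => j; rewrite -ltnS -(ltnS j) -!subSn ?leq_ord //.
  by rewrite -subn_gt0 -(subn_gt0 j) -!subnDA addnC.
rewrite (big_ord_narrow_leq (leq_subr _ _)) /conv mulmx_suml /=.
by apply: eq_bigr => j _; rewrite /c3 -!subnDA addnC mulmxA.
Qed.

Lemma conv_ext f f' g g' k :
  (forall i, (i <= k)%N -> f i = f' i) -> (forall i, (i <= k)%N -> g i = g' i) ->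
  conv f g k = conv f' g' k.
Proof.
move=> Hf Hg; apply: eq_bigr => i _.
by rewrite Hf ?Hg ?leq_subr // -ltnS.
Qed.

Lemma conv_l_low f g h k : (forall j, (j < k)%N -> f j = g j) ->
  conv f h k = conv g h k + (f k - g k) *m h 0%N.
Proof.
move=> H; rewrite /conv !big_ord_recr /= subnn.
have -> : \sum_(i < k) f (widen_ord (leqnSn k) i) *m h (k - widen_ord (leqnSn k) i)%N
   = \sum_(i < k) g (widen_ord (leqnSn k) i) *m h (k - widen_ord (leqnSn k) i)%N.
  by apply: eq_bigr => i _; rewrite H /= ?ltn_ord.
by rewrite mulmxBl -addrA (addrC (g k *m h 0%N)) addrNK.
Qed.

Lemma conv_r_low f g h k : (forall j, (j < k)%N -> f j = g j) ->
  conv h f k = conv h g k + h 0%N *m (f k - g k).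
Proof.
move=> H; rewrite /conv !big_ord_recl /= subn0.
have -> : \sum_(i < k) h (bump 0 i) *m f (k - bump 0 i)%N
   = \sum_(i < k) h (bump 0 i) *m g (k - bump 0 i)%N.
  apply: eq_bigr => i _; rewrite H //.
  by rewrite /bump /= add1n; case: k {H} i => [|k] i; [case: i|rewrite subSS ltnS leq_subr].
by rewrite mulmxBr (addrC (h 0%N *m g k)) -addrA (addrC (h 0%N *m g k)) addrNK addrC.
Qed.


Lemma conv_oppl f g k : conv (fun j => - f j) g k = - conv f g k.
Proof. by rewrite /conv -sumrN; apply: eq_bigr => i _; rewrite mulNmx. Qed.
Lemma conv_oppr f g k : conv f (fun j => - g j) k = - conv f g k.
Proof. by rewrite /conv -sumrN; apply: eq_bigr => i _; rewrite mulmxN. Qed.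
Lemma conv_addl f f' g k : conv (fun j => f j + f' j) g k = conv f g k + conv f' g k.
Proof. by rewrite /conv -big_split; apply: eq_bigr => i _; rewrite mulmxDl. Qed.
Lemma conv_addr f g g' k : conv f (fun j => g j + g' j) k = conv f g k + conv f g' k.
Proof. by rewrite /conv -big_split; apply: eq_bigr => i _; rewrite mulmxDr. Qed.

Lemma conv_split f g k : conv f g k.+1 =
  f 0%N *m g k.+1 + f k.+1 *m g 0%N + \sum_(1 <= i < k.+1) f i *m g (k.+1 - i)%N.
Proof.
rewrite /conv big_ord_recl big_ord_recr /= subn0 subnn -addrA; congr (_ + _).
rewrite addrC big_add1 /= big_mkord; congr (_ + _).
Qed.

End Conv.
Arguments conv {R n} f g k.

Lemma map_conv (R1 R2 : pzRingType) n (phi : {rmorphism R1 -> R2}) (f g : nat -> 'M[R1]_n) k :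
  map_mx phi (conv f g k) = conv (fun j => map_mx phi (f j)) (fun j => map_mx phi (g j)) k.
Proof.
rewrite /conv; apply/matrixP => r c; rewrite !mxE !summxE raddf_sum.
by apply: eq_bigr => i _; rewrite -map_mxM [RHS]mxE.
Qed.


Section DGA.
Variables (K : fieldType) (A : algType K) (deg : nat -> {pred A}) (d : {linear A -> A}).
Hypothesis HD : is_DGA deg d.
Variables (n : nat) (w : 'I_n -> int).

Definition ghom p (X : 'M[A]_n) := forall r c, X r c \in deg p.
Definition supp i (X : 'M[A]_n) := forall r c, X r c != 0 -> w c = w r + i%:Z.

Lemma in_AU_iff p i X : in_AU deg w p i X <-> ghom p X /\ supp i X.
Proof.
split; first by move=> H; split=> r c; case: (H r c).
by case=> H1 H2 r c; split; [apply: H1 | apply: H2].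
Qed.

Lemma deg0 p : (0 : A) \in deg p. Proof. exact: (dga_sub0 HD p). Qed.
Lemma degD p x y : x \in deg p -> y \in deg p -> x + y \in deg p.
Proof. by move=> hx hy; have := dga_subZD HD 1 hx hy; rewrite scale1r. Qed.
Lemma degN p x : x \in deg p -> - x \in deg p.
Proof. by move=> hx; have := dga_subZD HD (-1) hx (deg0 p); rewrite scaleN1r addr0. Qed.
Lemma deg_sum p (I : finType) (F : I -> A) : (forall i, F i \in deg p) -> \sum_i F i \in deg p.
Proof.
move=> H; elim/big_ind: _ => //; [exact: deg0 | exact: degD].
Qed.

Lemma hom0 p : ghom p 0. Proof. by move=> r c; rewrite mxE deg0. Qed.
Lemma homD p X Y : ghom p X -> ghom p Y -> ghom p (X + Y).
Proof. by move=> hX hY r c; rewrite mxE degD. Qed.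
Lemma homN p X : ghom p X -> ghom p (- X).
Proof. by move=> hX r c; rewrite mxE degN. Qed.
Lemma homM p q X Y : ghom p X -> ghom q Y -> ghom (p + q) (X *m Y).
Proof.
move=> hX hY r c; rewrite mxE; apply: deg_sum => l.
exact: (dga_mul HD).
Qed.
Lemma hom_sum p m (F : 'I_m -> 'M[A]_n) : (forall i, ghom p (F i)) -> ghom p (\sum_i F i).
Proof.
move=> H r c; rewrite summxE; apply: deg_sum => i; exact: H.
Qed.
Lemma hom1 : ghom 0 1%:M.
Proof. by move=> r c; rewrite mxE; case: (r == c); [exact: (dga_one HD) | exact: deg0]. Qed.
Lemma homd p X : ghom p X -> ghom p.+1 (map_mx d X).
Proof. by move=> hX r c; rewrite mxE; apply: (dga_d_deg HD). Qed.

Lemma hom_conv p q (f g : nat -> 'M[A]_n) k :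
  (forall i, (i <= k)%N -> ghom p (f i)) -> (forall i, (i <= k)%N -> ghom q (g i)) ->
  ghom (p + q) (conv f g k).
Proof.
move=> Hf Hg; apply: hom_sum => i; apply: homM; [apply: Hf | apply: Hg].
  by rewrite -ltnS. by rewrite leq_subr.
Qed.

Lemma supp0 i : supp i 0. Proof. by move=> r c; rewrite mxE eqxx. Qed.
Lemma suppD i X Y : supp i X -> supp i Y -> supp i (X + Y).
Proof.
move=> hX hY r c; rewrite mxE => h.
case: (X r c =P 0) => [e|/eqP]; last exact: hX.
by apply: hY; move: h; rewrite e add0r.
Qed.
Lemma suppN i X : supp i X -> supp i (- X).
Proof. by move=> hX r c; rewrite mxE oppr_eq0; exact: hX. Qed.
Lemma supp_sum i m (F : 'I_m -> 'M[A]_n) : (forall j, supp i (F j)) -> supp i (\sum_j F j).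
Proof.
move=> H; elim/big_ind: _ => //; [exact: supp0 | exact: suppD].
Qed.
Lemma suppM i j X Y : supp i X -> supp j Y -> supp (i + j) (X *m Y).
Proof.
move=> hX hY r c; rewrite mxE => h.
case: (boolP [exists l, X r l * Y l c != 0]) => [/existsP [l hl] | /existsPn hn]; last first.
  by move: h; rewrite big1 ?eqxx // => l _; have := hn l; rewrite negbK => /eqP.
have hXl : X r l != 0 by apply: contraNneq hl => ->; rewrite mul0r.
have hYl : Y l c != 0 by apply: contraNneq hl => ->; rewrite mulr0.
by rewrite (hY _ _ hYl) (hX _ _ hXl) PoszD addrA.
Qed.
Lemma supp1 : supp 0 1%:M.
Proof.
move=> r c; rewrite mxE; case: (r =P c) => [->|_]; first by rewrite addr0.
by rewrite mulr0n eqxx.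
Qed.
Lemma suppd i X : supp i X -> supp i (map_mx d X).
Proof.
move=> hX r c; rewrite mxE => h; apply: hX; apply: contraNneq h => ->.
by rewrite linear0.
Qed.
Lemma supp_conv (f g : nat -> 'M[A]_n) k :
  (forall i, (i <= k)%N -> supp i (f i)) -> (forall i, (i <= k)%N -> supp i (g i)) ->
  supp k (conv f g k).
Proof.
move=> Hf Hg; apply: supp_sum => i.
have hi : (i <= k)%N by rewrite -ltnS.
have := suppM (Hf i hi) (Hg _ (leq_subr i k)); by rewrite subnKC.
Qed.

Lemma leibniz_mx p X (Y : 'M[A]_n) : ghom p X ->
  map_mx d (X *m Y) = map_mx d X *m Y + ((-1 : A) ^+ p) *: (X *m map_mx d Y).
Proof.
move=> hX; apply/matrixP => r c; rewrite !mxE raddf_sum mulr_sumr -big_split /=.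
apply: eq_bigr => l _; rewrite (dga_leibniz HD (Y l c) (hX r l)) !mxE.
by [].
Qed.

Lemma leibniz0 X (Y : 'M[A]_n) : ghom 0 X ->
  map_mx d (X *m Y) = map_mx d X *m Y + X *m map_mx d Y.
Proof. by move/leibniz_mx => ->; rewrite expr0 scale1r. Qed.
Lemma leibniz1 X (Y : 'M[A]_n) : ghom 1 X ->
  map_mx d (X *m Y) = map_mx d X *m Y - X *m map_mx d Y.
Proof. by move/leibniz_mx => ->; rewrite expr1 scaleN1r. Qed.

Lemma mapd_sum m (F : 'I_m -> 'M[A]_n) :
  map_mx d (\sum_i F i) = \sum_i map_mx d (F i).
Proof.
apply/matrixP => r c; rewrite mxE !summxE raddf_sum.
by apply: eq_bigr => i _; rewrite mxE.
Qed.

Lemma dconv0 (f g : nat -> 'M[A]_n) k : (forall i, (i <= k)%N -> ghom 0 (f i)) ->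
  map_mx d (conv f g k) =
  conv (fun j => map_mx d (f j)) g k + conv f (fun j => map_mx d (g j)) k.
Proof.
move=> H; rewrite /conv -big_split /= mapd_sum; apply: eq_bigr => i _.
by rewrite leibniz0 //; apply: H; rewrite -ltnS.
Qed.
Lemma dconv1 (f g : nat -> 'M[A]_n) k : (forall i, (i <= k)%N -> ghom 1 (f i)) ->
  map_mx d (conv f g k) =
  conv (fun j => map_mx d (f j)) g k - conv f (fun j => map_mx d (g j)) k.
Proof.
move=> H; rewrite /conv -sumrN -big_split /= mapd_sum; apply: eq_bigr => i _.
by rewrite leibniz1 //; apply: H; rewrite -ltnS.
Qed.

End DGA.


Lemma mx_choice (T : Type) n (P : 'I_n -> 'I_n -> T -> Prop) :
  (forall r c, exists y, P r c y) -> exists M : 'I_n -> 'I_n -> T, forall r c, P r c (M r c).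
Proof.
move=> H.
exists (fun r c => proj1_sig (constructive_indefinite_description _ (H r c))).
by move=> r c; exact: proj2_sig.
Qed.

Lemma mapN (R1 R2 : pzRingType) (f : {additive R1 -> R2}) n (X : 'M[R1]_n) :
  map_mx f (- X) = - map_mx f X.
Proof. by apply/matrixP => r c; rewrite !mxE raddfN. Qed.
Lemma mapD (R1 R2 : pzRingType) (f : {additive R1 -> R2}) n (X Y : 'M[R1]_n) :
  map_mx f (X + Y) = map_mx f X + map_mx f Y.
Proof. by apply/matrixP => r c; rewrite !mxE raddfD. Qed.
Lemma map0 (R1 R2 : pzRingType) (f : {additive R1 -> R2}) n :
  map_mx f (0 : 'M[R1]_n) = 0.
Proof. by apply/matrixP => r c; rewrite !mxE raddf0. Qed.

Lemma alg1 (V : zmodType) (a p q t : V) : -(-a - (-a + p)) + (-p + q + (-q + t)) = t.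
Proof. by rewrite opprB opprK (addrAC (- a)) addNr add0r -(addrA (- p)) addNKr addNKr. Qed.

Definition upd T (f : nat -> T) k x := fun j => if j == k then x else f j.

Section Step.
Variables (K : fieldType) (A1 A2 : algType K).
Variables (deg1 : nat -> {pred A1}) (d1 : {linear A1 -> A1}).
Variables (deg2 : nat -> {pred A2}) (d2 : {linear A2 -> A2}).
Variable (phi : {lrmorphism A1 -> A2}).
Variables (n : nat) (w : 'I_n -> int) (omega : nat -> 'M[A2]_n).
Hypotheses (HD1 : is_DGA deg1 d1) (HD2 : is_DGA deg2 d2).
Hypothesis Hmor : is_DGA_morphism deg1 d1 deg2 d2 phi.
Hypothesis Hinj2 : H_injective deg1 d1 deg2 d2 phi 2.
Hypothesis Hsurj1 : H_surjective deg1 d1 deg2 d2 phi 1.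
Hypothesis Homega : forall i, (1 <= i)%N -> in_AU deg2 w 1 i (omega i).
Hypothesis Hflat : forall k, (1 <= k)%N ->
     map_mx d2 (omega k) = - \sum_(1 <= i < k) omega i *m omega (k - i)%N.

Definition W j := if j == 0%N then 0 else omega j.
Definition Fm (O : nat -> 'M[A1]_n) j := map_mx phi (O j).

Definition Good k O b := [/\ in_AU deg1 w 1 k (O k), in_AU deg2 w 0 k (b k),
  map_mx d1 (O k) = - conv O O k &
  map_mx d2 (b k) = - conv W b k + conv b (Fm O) k].

Lemma W0 : W 0 = 0. Proof. by []. Qed.
Lemma W_hom j : ghom deg2 1 (W j).
Proof.
rewrite /W; case: j => [|j] /=. exact: (@hom0 _ _ _ _ HD2 n 1).
by case/in_AU_iff: (Homega (ltn0Sn j)).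
Qed.
Lemma W_supp j : supp w j (W j).
Proof.
rewrite /W; case: j => [|j] /=; first exact: supp0.
by case/in_AU_iff: (Homega (ltn0Sn j)).
Qed.
Lemma dW j : map_mx d2 (W j) = - conv W W j.
Proof.
case: j => [|j].
  by rewrite /conv big_ord1 /= W0 mul0mx oppr0 map0.
rewrite conv_split W0 mul0mx mulmx0 !add0r Hflat //.
congr (- _); apply: eq_big_nat => i /andP[hi1 hi2].
by move: hi1 hi2; case: i => [//|i] _; rewrite ltnS /W /= subSS -subn_gt0; case: (j - i)%N.
Qed.

Lemma phi_hom p (X : 'M[A1]_n) : ghom deg1 p X -> ghom deg2 p (map_mx phi X).
Proof. by move=> h r c; rewrite mxE; apply: Hmor.1. Qed.
Lemma phi_supp i (X : 'M[A1]_n) : supp w i X -> supp w i (map_mx phi X).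
Proof.
move=> h r c; rewrite mxE => hx; apply: h; apply: contraNneq hx => ->.
by rewrite rmorph0.
Qed.
Lemma phi_d (X : 'M[A1]_n) : map_mx phi (map_mx d1 X) = map_mx d2 (map_mx phi X).
Proof. by apply/matrixP => r c; rewrite !mxE Hmor.2. Qed.


Lemma Good_ext k O O' b b' : (forall j, (j <= k)%N -> O j = O' j) ->
  (forall j, (j <= k)%N -> b j = b' j) -> Good k O b -> Good k O' b'.
Proof.
move=> HO Hb [h1 h2 h3 h4].
have eO := HO k (leqnn k); have eb := Hb k (leqnn k).
split; first by rewrite -eO. by rewrite -eb.
  by rewrite -eO h3; congr (- _); apply: conv_ext.
rewrite -eb h4; congr (_ + _); first by congr (- _); apply: conv_ext.
by apply: conv_ext => // j hj; rewrite /Fm HO.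
Qed.

Lemma step k O b : (0 < k)%N -> O 0%N = 0 -> b 0%N = 1%:M ->
  (forall j, (j < k)%N -> Good j O b) ->
  exists X Y, Good k (upd O k X) (upd b k Y).
Proof.
move=> k0 O0 b0 HG.
pose O' := upd O k 0; pose b' := upd b k 0.
have HG' : forall j, (j < k)%N -> Good j O' b'.
  move=> j hj; apply: (Good_ext _ _ (HG j hj)) => i hi;
  by rewrite /O' /b' /upd ltn_eqF // (leq_ltn_trans hi hj).
have nk0 : (0 == k)%N = false by rewrite eq_sym; apply/negbTE; rewrite -lt0n.
have hO'0 : O' 0%N = 0 by rewrite /O' /upd nk0.
have hb'0 : b' 0%N = 1%:M by rewrite /b' /upd nk0.
have hO'k : O' k = 0 by rewrite /O' /upd eqxx.
have hb'k : b' k = 0 by rewrite /b' /upd eqxx.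
have homO : forall j, (j <= k)%N -> ghom deg1 1 (O' j) /\ supp w j (O' j).
  move=> j; rewrite leq_eqVlt => /orP[/eqP ->|hj].
    by rewrite hO'k; split; [exact: (@hom0 _ _ _ _ HD1 n 1) | exact: supp0].
  by case: (HG' j hj) => /in_AU_iff.
have homb : forall j, (j <= k)%N -> ghom deg2 0 (b' j) /\ supp w j (b' j).
  move=> j; rewrite leq_eqVlt => /orP[/eqP ->|hj].
    by rewrite hb'k; split; [exact: (@hom0 _ _ _ _ HD2 n 0) | exact: supp0].
  by case: (HG' j hj) => _ /in_AU_iff.
pose F := Fm O'.
have homF : forall j, (j <= k)%N -> ghom deg2 1 (F j) /\ supp w j (F j).
  by move=> j hj; case: (homO j hj) => h1 h2; split; [apply: phi_hom | apply: phi_supp].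
have hF0 : F 0%N = 0 by rewrite /F /Fm hO'0 map0.
have dO : forall j, (j < k)%N -> map_mx d1 (O' j) = - conv O' O' j.
  by move=> j hj; case: (HG' j hj).
have db : forall j, (j < k)%N -> map_mx d2 (b' j) = - conv W b' j + conv b' F j.
  by move=> j hj; case: (HG' j hj).
have dF : forall j, (j < k)%N -> map_mx d2 (F j) = - conv F F j.
  by move=> j hj; rewrite /F /Fm -phi_d dO // mapN map_conv.
pose Th := conv O' O' k.
have hTh : ghom deg1 2 Th.
  by apply: (hom_conv HD1 (p := 1) (q := 1)) => j hj; case: (homO j hj).
have sTh : supp w k Th.
  by apply: supp_conv => j hj; case: (homO j hj).
pose S := - conv W b' k + conv b' F k.
have hS : ghom deg2 1 S.
  apply: (homD HD2); first apply: (homN HD2).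
    by apply: (hom_conv HD2 (p := 1) (q := 0)) => j hj; [exact: W_hom | case: (homb j hj)].
  by apply: (hom_conv HD2 (p := 0) (q := 1)) => j hj; [case: (homb j hj) | case: (homF j hj)].
have sS : supp w k S.
  apply: suppD; first apply: suppN.
    by apply: supp_conv => j hj; [exact: W_supp | case: (homb j hj)].
  by apply: supp_conv => j hj; [case: (homb j hj) | case: (homF j hj)].
have dTh : map_mx d1 Th = 0.
  rewrite /Th (dconv1 HD1); last by move=> j hj; case: (homO j hj).
  rewrite (conv_l_low _ dO) (conv_r_low _ dO) hO'0 mulmx0 mul0mx !addr0.
  by rewrite conv_oppl conv_oppr convA subrr.
have dS : map_mx d2 S = map_mx phi Th.
  rewrite /S mapD mapN (dconv1 HD2 (f := W)); last by move=> j _; exact: W_hom.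
  rewrite (dconv0 HD2 (f := b')); last by move=> j hj; case: (homb j hj).
  rewrite (conv_ext (f' := fun j => - conv W W j) (g' := b')) //; last by move=> j _; rewrite dW.
  rewrite (conv_r_low _ db) (conv_l_low _ db) (conv_r_low _ dF) W0 hF0 hb'0.
  rewrite /F /Fm hO'k map0 -/(Fm O') -/F /Th map_conv -/(Fm O') -/F.
  rewrite mul0mx mulmx0 mul1mx !addr0 ?add0r ?sub0r ?opprK.
  rewrite !conv_oppl !conv_oppr !conv_addl !conv_addr !conv_oppl !conv_oppr !convA.
  by rewrite map0 add0r alg1.
have ch1 : forall r c, exists y, [/\ y \in deg1 1, Th r c = d1 y &
    (y != 0 -> w c = w r + k%:Z)].
  move=> r c; case: (Th r c =P 0) => [e|/eqP ne].
    by exists 0; rewrite e linear0; split => //; [exact: (deg0 HD1) | rewrite eqxx].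
  have sup := sTh r c ne.
  have dz : d1 (Th r c) = 0 by have := congr1 (fun M : 'M[A1]_n => M r c) dTh; rewrite !mxE.
  have ex2 : exact_in deg2 d2 2 (phi (Th r c)).
    exists (S r c); split; first exact: hS.
    by have := congr1 (fun M : 'M[A2]_n => M r c) dS; rewrite !mxE.
  have [y [hy ey]] := Hinj2 (hTh r c) dz ex2.
  by exists y; split.
have [M1 HM1] := mx_choice ch1.
pose X' : 'M[A1]_n := - \matrix_(r, c) M1 r c.
have hX' : ghom deg1 1 X'.
  by apply: (homN HD1) => r c; rewrite mxE; case: (HM1 r c).
have sX' : supp w k X'.
  by apply: suppN => r c; rewrite mxE; case: (HM1 r c) => _ _; apply.
have dX' : map_mx d1 X' = - Th.
  by apply/matrixP => r c; rewrite !mxE raddfN; case: (HM1 r c) => _ ->.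
pose T := S + map_mx phi X'.
have hT : ghom deg2 1 T by apply: (homD HD2) => //; exact: phi_hom.
have sT : supp w k T by apply: suppD => //; exact: phi_supp.
have dT : map_mx d2 T = 0 by rewrite /T mapD dS -phi_d dX' mapN addrN.
have ch2 : forall r c, exists p : A1 * A2,
    [/\ p.1 \in deg1 1, d1 p.1 = 0, p.1 != 0 -> w c = w r + k%:Z,
      p.2 \in deg2 0 & (p.2 != 0 -> w c = w r + k%:Z) /\ - T r c - phi p.1 = d2 p.2].
  move=> r c; case: (T r c =P 0) => [e|/eqP ne].
    exists (0, 0); rewrite /= e ?linear0 ?rmorph0 ?oppr0 ?subr0 ?eqxx.
    split => //; [exact: (deg0 HD1) | exact: (deg0 HD2) | by rewrite addr0].
  have sup := sT r c ne.
  have hz : - T r c \in deg2 1 by apply: (degN HD2).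
  have dz : d2 (- T r c) = 0.
    rewrite raddfN; move/matrixP: dT => /(_ r c); rewrite !mxE => e; apply/eqP; rewrite oppr_eq0; apply/eqP; exact: e.
  have [x [hx dx [y [hy ey]]]] := Hsurj1 hz dz.
  by exists (x, y).
have [M2 HM2] := mx_choice ch2.
pose Xm : 'M[A1]_n := \matrix_(r, c) (M2 r c).1.
pose Ym : 'M[A2]_n := \matrix_(r, c) (M2 r c).2.
have hXm : ghom deg1 1 Xm by move=> r c; rewrite mxE; case: (HM2 r c).
have sXm : supp w k Xm by move=> r c; rewrite mxE; case: (HM2 r c).
have hYm : ghom deg2 0 Ym by move=> r c; rewrite mxE; case: (HM2 r c).
have sYm : supp w k Ym by move=> r c; rewrite mxE; case: (HM2 r c) => _ _ _ _ [].
have dXm : map_mx d1 Xm = 0.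
  by apply/matrixP => r c; rewrite !mxE; case: (HM2 r c).
have dYm : map_mx d2 Ym = - T - map_mx phi Xm.
  by apply/matrixP => r c; case: (HM2 r c) => _ _ _ _ [_ e]; rewrite !mxE -e !mxE.
exists (X' + Xm), (- Ym).
pose O'' := upd O' k (X' + Xm); pose b'' := upd b' k (- Ym).
apply: (Good_ext (O := O'') (b := b'')) => [j _|j _|].
- by rewrite /O'' /O' /upd; case: eqP.
- by rewrite /b'' /b' /upd; case: eqP.
have hO''k : O'' k = X' + Xm by rewrite /O'' /upd eqxx.
have hb''k : b'' k = - Ym by rewrite /b'' /upd eqxx.
have lowO : forall j, (j < k)%N -> O'' j = O' j by move=> j hj; rewrite /O'' /upd ltn_eqF.
have lowb : forall j, (j < k)%N -> b'' j = b' j by move=> j hj; rewrite /b'' /upd ltn_eqF.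
have hO''0 : O'' 0%N = 0 by rewrite lowO.
have hFm0 : Fm O'' 0%N = 0 by rewrite /Fm hO''0 map0.
have lowF : forall j, (j < k)%N -> Fm O'' j = F j by move=> j hj; rewrite /Fm /F /Fm lowO.
have hFk : F k = 0 by rewrite /F /Fm hO'k map0.
split.
- rewrite hO''k; apply/in_AU_iff; split; first exact: (homD HD1).
  exact: suppD.
- rewrite hb''k; apply/in_AU_iff; split; first exact: (homN HD2).
  exact: suppN.
- rewrite hO''k (conv_l_low _ lowO) (conv_r_low _ lowO) hO''0 hO'0 mulmx0 mul0mx !addr0.
  by rewrite -/Th mapD dX' dXm addr0.
- rewrite hb''k (conv_r_low _ lowb) W0 mul0mx addr0.
  rewrite (conv_l_low _ lowb) hFm0 mulmx0 addr0 (conv_r_low _ lowF) hb'0 mul1mx hFk subr0.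
  rewrite /Fm hO''k mapN dYm opprD !opprK /T /S mapD.
  by rewrite !addrA.
Qed.


Lemma xxx (V : zmodType) (x : V) : x = x + x -> x = 0.
Proof. by move=> e; apply: (addrI x); rewrite addr0 -e. Qed.

Lemma d_one : d2 1 = 0.
Proof.
have := dga_leibniz HD2 1 (dga_one HD2); rewrite mul1r expr0 !mul1r mulr1.
by move=> e; apply: xxx.
Qed.

Lemma Good0 O b : O 0%N = 0 -> b 0%N = 1%:M -> Good 0 O b.
Proof.
move=> O0 b0; split.
- by rewrite O0; apply/in_AU_iff; split; [exact: (@hom0 _ _ _ _ HD1 n 1) | exact: supp0].
- by rewrite b0; apply/in_AU_iff; split; [exact: (hom1 HD2) | exact: supp1].
- by rewrite /conv big_ord1 /= O0 mul0mx oppr0 map0.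
- rewrite /conv !big_ord1 /= W0 mul0mx oppr0 add0r /Fm O0 map0 mulmx0 b0.
  apply/matrixP => r c; rewrite !mxE; case: (r == c); rewrite /= ?mulr1n ?mulr0n ?d_one //.
  exact: linear0.
Qed.

Definition stT := ((nat -> 'M[A1]_n) * (nat -> 'M[A2]_n))%type.
Definition Pst k (s s' : stT) :=
  (forall j, j != k -> s'.1 j = s.1 j /\ s'.2 j = s.2 j) /\ Good k s'.1 s'.2.
Definition inhst : inhabited stT := inhabits (fun _ => 0, fun _ => 0).
Fixpoint st m : stT := match m with
  | 0 => (fun _ => 0, fun j => if j == 0%N then 1%:M else 0)
  | m'.+1 => epsilon inhst (Pst m'.+1 (st m'))
  end.

Lemma st_spec m : (st m).1 0%N = 0 /\ (st m).2 0%N = 1%:M /\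
  (forall j, (j <= m)%N -> Good j (st m).1 (st m).2) /\
  Pst m.+1 (st m) (st m.+1).
Proof.
elim: m => [|m [h1 [h2 [h3 h4]]]].
  have h1 : (st 0).1 0%N = 0 by [].
  have h2 : (st 0).2 0%N = 1%:M by [].
  have h3 : forall j, (j <= 0)%N -> Good j (st 0).1 (st 0).2.
    by move=> j; rewrite leqn0 => /eqP ->; apply: Good0.
  split=> //; split=> //; split=> //.
  apply: (epsilon_spec inhst (Pst 1 (st 0))).
  have [X [Y HXY]] := step (ltn0Sn 0) h1 h2 (fun j hj => h3 j hj).
  exists (upd (st 0).1 1 X, upd (st 0).2 1 Y); split => // j hj.
  by rewrite /upd /= (negbTE hj).
case: h4 => hag hG.
have n0 : (0 != m.+1)%N by [].
have h1' : (st m.+1).1 0%N = 0 by case: (hag 0%N n0) => -> _.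
have h2' : (st m.+1).2 0%N = 1%:M by case: (hag 0%N n0) => _ ->.
have h3' : forall j, (j <= m.+1)%N -> Good j (st m.+1).1 (st m.+1).2.
  move=> j; rewrite leq_eqVlt => /orP[/eqP ->|hj] //.
  apply: (Good_ext _ _ (h3 j hj)) => i hi.
    by case: (hag i (negbT (ltn_eqF (leq_ltn_trans hi hj)))) => ->.
  by case: (hag i (negbT (ltn_eqF (leq_ltn_trans hi hj)))) => _ ->.
split=> //; split=> //; split=> //.
apply: (epsilon_spec inhst (Pst m.+2 (st m.+1))).
have [X [Y HXY]] := step (ltn0Sn m.+1) h1' h2' (fun j hj => h3' j hj).
exists (upd (st m.+1).1 m.+2 X, upd (st m.+1).2 m.+2 Y); split => // j hj.
by rewrite /upd /= (negbTE hj).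
Qed.

Lemma st_stable j m : (j <= m)%N -> (st m).1 j = (st j).1 j /\ (st m).2 j = (st j).2 j.
Proof.
elim: m => [|m IH]; first by rewrite leqn0 => /eqP ->.
rewrite leq_eqVlt => /orP[/eqP ->|hj] //.
have [_ [_ [_ [hag _]]]] := st_spec m.
have hne : j != m.+1 by apply: negbT; apply: ltn_eqF.
case: (hag j hne) => -> ->; exact: IH.
Qed.

Lemma main_gen : exists (Omega : nat -> 'M[A1]_n) (a : nat -> 'M[A2]_n),
    (forall i, (1 <= i)%N -> in_AU deg1 w 1 i (Omega i)) /\
    (forall i, (1 <= i)%N -> in_AU deg2 w 0 i (a i)) /\
    (forall k, (1 <= k)%N ->
       map_mx d1 (Omega k) = - \sum_(1 <= i < k) Omega i *m Omega (k - i)%N /\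
       map_mx d2 (a k) =
         - \sum_(1 <= i < k.+1)
              omega i *m (if (k - i == 0)%N then 1%:M else a (k - i)%N)
         + \sum_(0 <= i < k)
              (if (i == 0)%N then 1%:M else a i) *m map_mx phi (Omega (k - i)%N)).
Proof.
pose Om j := (st j).1 j; pose a j := (st j).2 j.
have Om0 : Om 0%N = 0 by [].
have a0 : a 0%N = 1%:M by [].
have GG : forall k, Good k Om a.
  move=> k; have [_ [_ [h3 _]]] := st_spec k.
  apply: (Good_ext _ _ (h3 k (leqnn k))) => i hi; rewrite /Om /a;
  by case: (st_stable hi).
have ha' : forall j, (if j == 0%N then 1%:M else a j) = a j by case.
exists Om, a; split; [|split].
- by move=> i _; case: (GG i).
- by move=> i _; case: (GG i).
move=> [//|k] _; case: (GG k.+1) => _ _ e1 e2; split.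
  by rewrite e1 conv_split Om0 mul0mx mulmx0 !add0r.
rewrite e2; congr (- _ + _).
  rewrite /conv big_ord_recl W0 mul0mx add0r big_add1 /= big_mkord.
  by apply: eq_bigr => i _; rewrite ha'.
rewrite /conv big_ord_recr /= subnn /Fm Om0 map0 mulmx0 addr0 big_mkord.
by apply: eq_bigr => i _; rewrite ha'.
Qed.

End Step.

Unset Implicit Arguments.

Theorem lemma10p3 (R : realType) (isC : bool)
    (A1 A2 : algType (Kof R isC))
    (deg1 : nat -> {pred A1}) (d1 : {linear A1 -> A1})
    (deg2 : nat -> {pred A2}) (d2 : {linear A2 -> A2})
    (phi : {lrmorphism A1 -> A2})
    (n : nat) (w : 'I_n -> int) (omega : nat -> 'M[A2]_n) :
  is_DGA deg1 d1 -> is_DGA deg2 d2 ->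
  cohom_connected deg1 d1 -> cohom_connected deg2 d2 ->
  is_DGA_morphism deg1 d1 deg2 d2 phi ->
  H_injective deg1 d1 deg2 d2 phi 0 -> H_surjective deg1 d1 deg2 d2 phi 0 ->
  H_injective deg1 d1 deg2 d2 phi 1 -> H_surjective deg1 d1 deg2 d2 phi 1 ->
  H_injective deg1 d1 deg2 d2 phi 2 ->
  (forall i, (1 <= i)%N -> in_AU deg2 w 1 i (omega i)) ->
  (forall k, (1 <= k)%N ->
     map_mx d2 (omega k) = - \sum_(1 <= i < k) omega i *m omega (k - i)%N) ->
  exists (Omega : nat -> 'M[A1]_n) (a : nat -> 'M[A2]_n),
    (forall i, (1 <= i)%N -> in_AU deg1 w 1 i (Omega i)) /\
    (forall i, (1 <= i)%N -> in_AU deg2 w 0 i (a i)) /\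
    (forall k, (1 <= k)%N ->
       map_mx d1 (Omega k) = - \sum_(1 <= i < k) Omega i *m Omega (k - i)%N /\
       map_mx d2 (a k) =
         - \sum_(1 <= i < k.+1)
              omega i *m (if (k - i == 0)%N then 1%:M else a (k - i)%N)
         + \sum_(0 <= i < k)
              (if (i == 0)%N then 1%:M else a i) *m map_mx phi (Omega (k - i)%N)).
Proof.
move=> HD1 HD2 _ _ Hmor _ _ _ Hs1 Hi2 Hom Hfl.
exact: (main_gen HD1 HD2 Hmor Hi2 Hs1 Hom Hfl).
Qed.
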